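(* There exists a measure-preserving transformation $T:[0,1]\to[0,1]$, generated by a network with task-driven neurons, and a point $\xi\in[0,1]$ such that the orbit $\{T^n(\xi): n\in\mathbb{N}\}$ is dense in $[0,1]$. Equivalently, for every $x\in[0,1]$ and every $\epsilon>0$ there exists $m\in\mathbb{N}$ with \[ |x - T^{m}(\xi)| < \epsilon . \]
   Context: $T^m$ denotes the $m$-fold composition of $T$ with itself. A task-driven neuron with input $\mathbf{z}\in\mathbb{R}^d$ computes $y=\sigma(g(\mathbf{z}))$, where $\sigma$ is a common activation function (e.g. ReLU) and the aggregation function $g$ replaces the usual inner product $\mathbf{w}^\top\mathbf{z}+b$ by a nonlinear expression with learnable coefficients built from polynomial terms $\mathbf{w}_k^\top \mathbf{z}^{\odot k}$ (element-wise powers), interaction terms $\sum_{r=1}^R\prod_{j=1}^m(\mathbf{a}_{r,j}^\top\mathbf{z})$, and possibly a periodic term $D\sin(\mathbf{z})$, plus a bias; in particular a neuron may have a polynomial of any order as its aggregation function. A network with task-driven neurons is a feedforward network built from such neurons. Measure-preserving is with respect to Lebesgue measure on $[0,1]$. *)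

(* Defs.v *)
From HB Require Import structures.
From mathcomp Require Import all_boot all_order all_algebra.
From mathcomp Require Import all_classical all_reals all_analysis.
Set Implicit Arguments. Unset Strict Implicit. Unset Printing Implicit Defensive.
Import Order.TTheory GRing.Theory Num.Theory.
Local Open Scope classical_set_scope.
Local Open Scope ring_scope.

Section TaskDriven.
Variable R : realType.

Inductive activation := act_relu | act_identity.

Definition act_eval (s : activation) (t : R) : R :=
  match s with act_relu => Num.max t 0 | act_identity => t end.

(* A task-driven neuron with input z in R^d (vectors as 'I_d -> R):
   y = sigma(g(z)),
   g(z) = sum_{k=1}^{K} w_k^T z^{.k}
        + sum_{r<Rn} prod_{j<m} (a_{r,j}^T z)
        + D sin(z) + b. *)
Record neuron (d : nat) := Neuron {
  n_act : activation;
  n_K : nat;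
  n_w : nat -> 'I_d -> R;
  n_R : nat;
  n_m : nat;
  n_a : nat -> nat -> 'I_d -> R;
  n_D : 'I_d -> R;
  n_b : R
}.

Definition aggregation d (n : neuron d) (z : 'I_d -> R) : R :=
  \sum_(1 <= k < (n_K n).+1) \sum_(i < d) n_w n k i * z i ^+ k
  + \sum_(r < n_R n) \prod_(j < n_m n) (\sum_(i < d) n_a n r j i * z i)
  + \sum_(i < d) n_D n i * sin (z i)
  + n_b n.

Definition neuron_eval d (n : neuron d) (z : 'I_d -> R) : R :=
  act_eval (n_act n) (aggregation n z).

Inductive network : nat -> nat -> Type :=
| NLast d e : ('I_e -> neuron d) -> network d e
| NLayer d e f : ('I_e -> neuron d) -> network e f -> network d f.

Fixpoint net_eval d e (N : network d e) : ('I_d -> R) -> ('I_e -> R) :=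
  match N in network d e return ('I_d -> R) -> ('I_e -> R) with
  | NLast _ _ L => fun z o => neuron_eval (L o) z
  | NLayer _ _ _ L N' => fun z => net_eval N' (fun o => neuron_eval (L o) z)
  end.

Definition net_map (N : network 1 1) (x : R) : R := net_eval N (fun _ => x) ord0.

Definition I01 : set R := `[0%R, 1%R].

Definition measure_preserving01 (T : R -> R) : Prop :=
  measurable_fun I01 T /\
  forall A : set R, measurable A -> A `<=` I01 ->
    (@lebesgue_measure R) (I01 `&` T @^-1` A) = (@lebesgue_measure R) A.

End TaskDriven.

(* Main.v *)
Require Import Defs.
From mathcomp Require Import all_boot all_order all_algebra.
From mathcomp Require Import all_classical all_reals all_analysis.
Import Order.TTheory GRing.Theory Num.Theory.
Local Open Scope classical_set_scope.
Local Open Scope ring_scope.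
From mathcomp Require Import ring lra zify measurable_realfun.

Section S.
Variable R : realType.
Definition tent (x : R) : R := 2 * x - 4 * Num.max (x - 2^-1) 0.
Lemma tent_le x : x <= 2^-1 -> tent x = 2 * x.
Proof. move=> h; rewrite /tent; have -> : Num.max (x - 2^-1) 0 = 0 by apply/max_idPr; rewrite subr_le0.
by rewrite mulr0 subr0. Qed.
Lemma tent_ge x : 2^-1 <= x -> tent x = 2 - 2 * x.
Proof. move=> h; rewrite /tent; have -> : Num.max (x - 2^-1) 0 = x - 2^-1 by apply/max_idPl; rewrite subr_ge0.
by field. Qed.
Definition n1 : neuron R 1 := Neuron act_identity 1 (fun _ _ => 1) 0 0 (fun _ _ _ => 0) (fun _ => 0) 0.
Definition n2 : neuron R 1 := Neuron act_relu 1 (fun _ _ => 1) 0 0 (fun _ _ _ => 0) (fun _ => 0) (- 2^-1).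
Definition nout : neuron R 2 := Neuron act_identity 1 (fun _ (i : 'I_2) => if val i == 0%N then 2 else -4) 0 0 (fun _ _ _ => 0) (fun _ => 0) 0.
Definition tentN : network R 1 1 :=
  NLayer (fun o : 'I_2 => if val o == 0%N then n1 else n2) (NLast (fun _ : 'I_1 => nout)).

Lemma tentN_eq : net_map tentN = tent.
Proof.
apply/funext => x.
rewrite /net_map /= /neuron_eval /aggregation /=.
rewrite !big_ord0 !big_nat1 !big_ord_recr /= !big_ord0 /=.
rewrite ?big_nat1 ?big_ord1 /tent !(mul0r, add0r, addr0, mul1r, expr1).
by rewrite mulNr. Qed.

Lemma dyad n j : (j < 2^n)%N -> exists s : bool, forall t : R, 0 <= t <= 1 ->
  iter n tent ((j%:R + t) / 2^+n) = if s then 1 - t else t.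
Proof.
elim: n j => [|n IH] j hj.
  have -> : j = 0%N by move: hj; rewrite expn0; case: j.
  by exists false => t _; rewrite expr0 divr1 add0r.
have P0 : (0:R) < 2^+n by rewrite exprn_gt0.
have hjn : (j%:R : R) + 1 <= 2 * 2^+n.
  have h : ((j.+1)%:R : R) <= (2^n.+1)%:R by rewrite ler_nat.
  by rewrite -natr1 natrX exprS in h.
case: (ltnP j (2^n)) => hj'.
  have [s Hs] := IH j hj'; exists s => t ht.
  have hjn' : (j%:R : R) + 1 <= 2^+n.
    have h : ((j.+1)%:R : R) <= (2^n)%:R by rewrite ler_nat.
  by rewrite -natr1 natrX in h.
  rewrite iterSr tent_le.
    rewrite -(Hs t ht); congr (iter n tent _); rewrite exprS; field; lra.
  rewrite exprS ler_pdivrMr; last by rewrite mulr_gt0.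
  lra.
have hj2 : (2^n.+1 - j.+1 < 2^n)%N by rewrite expnS; lia.
have [s Hs] := IH _ hj2; exists (~~ s) => t ht.
have hjn' : 2^+n <= (j%:R : R).
  have h : ((2^n)%:R : R) <= j%:R by rewrite ler_nat.
  by rewrite natrX in h.
have E : ((2^n.+1 - j.+1)%N%:R : R) = 2 * 2^+n - j%:R - 1.
  rewrite natrB; last exact: hj.
  rewrite natrX -(natr1 j) exprS; lra.
rewrite iterSr tent_ge.
  transitivity (iter n tent (((2 ^ n.+1 - j.+1)%:R + (1 - t)) / 2 ^+ n)).
    by congr (iter n tent _); rewrite E exprS; field; lra.
  by rewrite Hs; [case: (s) => /=; lra | lra].
rewrite exprS ler_pdivlMr; last by rewrite mulr_gt0.
lra.
Qed.
Lemma pow_small (e : R) : 0 < e -> exists p : nat, 1 / 2^+p < e.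
Proof.
move=> e0; exists (Num.truncn (e^-1)).+1.
have h1 := truncnS_gt (e^-1).
have h2 : ((Num.truncn (e^-1)).+1%:R : R) < 2^+(Num.truncn (e^-1)).+1.
  have h : (((Num.truncn (e^-1)).+1)%:R : R) < (2^(Num.truncn (e^-1)).+1)%:R.
    by rewrite ltr_nat ltn_expl.
  by rewrite natrX in h.
rewrite ltr_pdivrMr ?exprn_gt0 //.
have : 1 / e < 2^+(Num.truncn (e^-1)).+1 by rewrite div1r; exact: lt_trans h2.
by rewrite ltr_pdivrMr // mulrC.
Qed.

Lemma step (a b c d : R) : 0 <= a -> a < b -> b <= 1 -> 0 <= c -> c < d -> d <= 1 ->
  exists a' b' (m : nat), [/\ a <= a', a' < b', b' <= b &
    forall y, a' <= y <= b' -> c <= iter m tent y <= d].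
Proof.
move=> a0 ab b1 c0 cd d1.
have ba0 : 0 < (b - a) / 2 by rewrite divr_gt0 // subr_gt0.
have [p hp] := pow_small _ ba0.
set P : R := 2^+p.
have P0 : 0 < P by rewrite exprn_gt0.
have hp' : 2 < (b - a) * P.
  by move: hp; rewrite ltr_pdivrMr // mulrAC ltr_pdivlMr // mul1r.
have aP0 : 0 <= a * P by rewrite mulr_ge0 // ltW.
have [t1 t2] := andP (truncn_itv aP0).
set i := (Num.truncn (a * P)).+1.
have hi1 : a * P < i%:R by [].
have hi2 : (i%:R : R) <= a * P + 1 by rewrite /i -natr1 lerD2r.
have bP : b * P <= P by rewrite -[X in _ <= X]mul1r ler_pM2r.
have ip : (i < 2^p)%N.
  have : (i%:R : R) < (2^p)%:R by rewrite natrX -/P; lra.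
  by rewrite ltr_nat.
have [s Hs] := dyad _ _ ip.
have key : forall y, y = (i%:R + (y * P - i%:R)) / P by move=> y; field; lra.
have lem : forall y u v, u <= y <= v -> u * P <= y * P <= v * P.
  by move=> y u v /andP[h1 h2]; rewrite !ler_pM2r // h1 h2.
case: s Hs => Hs.
- exists ((i%:R + (1 - d)) / P), ((i%:R + (1 - c)) / P), p; split.
  + by rewrite ler_pdivlMr //; lra.
  + by rewrite ltr_pM2r ?invr_gt0 //; lra.
  + by rewrite ler_pdivrMr //; lra.
  move=> y /lem; rewrite !divfK ?gt_eqF // => /andP[y1 y2].
  rewrite (key y) Hs; lra.
- exists ((i%:R + c) / P), ((i%:R + d) / P), p; split.
  + by rewrite ler_pdivlMr //; lra.
  + by rewrite ltr_pM2r ?invr_gt0 //; lra.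
  + by rewrite ler_pdivrMr //; lra.
  move=> y /lem; rewrite !divfK ?gt_eqF // => /andP[y1 y2].
  rewrite (key y) Hs; lra.
Qed.
Definition tgt (k : nat) : R * R :=
  match @unpickle (prod nat nat) k with
  | Some (n, j) => if (j < 2^n)%N then (j%:R / 2^+n, j.+1%:R / 2^+n) else (0, 1)
  | None => (0, 1)
  end.

Lemma tgt_ok k : [/\ 0 <= (tgt k).1, (tgt k).1 < (tgt k).2 & (tgt k).2 <= 1].
Proof.
rewrite /tgt; case: unpickle => [[n j]|]; last by split => //; lra.
case: ifP => hj; last by split => //; lra.
have P0 : (0:R) < 2^+n by rewrite exprn_gt0.
split => /=.
- by rewrite divr_ge0 // ltW.
- by rewrite ltr_pM2r ?invr_gt0 // ltr_nat.
- rewrite ler_pdivrMr // mul1r.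
  have : ((j.+1)%:R : R) <= (2^n)%:R by rewrite ler_nat.
  by rewrite natrX.
Qed.

Definition valid (ab : R * R) := (0 <= ab.1) && (ab.1 < ab.2) && (ab.2 <= 1).

Lemma dense_orbit : exists xi : R, 0 <= xi <= 1 /\
  forall x, 0 <= x <= 1 -> forall eps, 0 < eps -> exists m : nat, `|x - iter m tent xi| < eps.
Proof.
have H : forall kab : nat * (R * R), exists ab' : R * R, valid kab.2 ->
   [/\ valid ab', kab.2.1 <= ab'.1, ab'.2 <= kab.2.2 &
    exists m : nat, forall y, ab'.1 <= y <= ab'.2 ->
       (tgt kab.1).1 <= iter m tent y <= (tgt kab.1).2].
  move=> [k [a b]] /=; case: (boolP (valid (a, b))) => v; last by exists (0, 0).
  move: v; rewrite /valid /= => /andP[/andP[a0 ab] b1].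
  have [c0 cd d1] := tgt_ok k.
  have [a' [b' [m [h1 h2 h3 h4]]]] := step _ _ _ _ a0 ab b1 c0 cd d1.
  exists (a', b') => _; split => //=; last by exists m.
  rewrite /valid /= h2 andbT.
  apply/andP; split; [exact: le_trans a0 h1 | exact: le_trans h3 b1].
have [f Hf] := choice H.
pose s := fix s (k : nat) : R * R := if k is k'.+1 then f (k', s k') else (0, 1).
have sv : forall k, valid (s k).
  elim => [|k IH]; first by rewrite /valid /=; lra.
  by have [] := Hf (k, s k) IH.
have sS : forall k, (s k).1 <= (s k.+1).1 /\ (s k.+1).2 <= (s k).2.
  by move=> k; have [] := Hf (k, s k) (sv k).
have mono : forall i d, (s i).1 <= (s (i + d)%N).1 /\ (s (i + d)%N).2 <= (s i).2.
  move=> i; elim => [|d [IH1 IH2]]; first by rewrite addn0.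
  have [h1 h2] := sS (i + d)%N; rewrite addnS; split.
    exact: le_trans h1.
  exact: le_trans IH2.
have ab : forall i k, (s i).1 <= (s k).2.
  move=> i k; have [h1 _] := mono i k; have [_ h2] := mono k i.
  have := sv (i + k)%N; rewrite /valid => /andP[/andP[_ h3] _].
  rewrite addnC in h2; apply: (le_trans h1); apply: (le_trans (ltW h3)); exact: h2.
set E := range (fun i => (s i).1).
have E0 : E !=set0 by exists (s 0%N).1, 0%N.
have Eub : forall k, ubound E (s k).2 by move=> k _ [i _ <-]; exact: ab.
have Ehub : has_ubound E by exists (s 0%N).2.
have xlo : forall k, (s k).1 <= sup E by move=> k; apply: ub_le_sup => //; exists k.
have xhi : forall k, sup E <= (s k).2 by move=> k; apply: ge_sup.
exists (sup E); split.
  by apply/andP; split; [exact: xlo 0%N | exact: xhi 0%N].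
move=> x /andP[x0 x1] eps eps0.
have [p hp] := pow_small _ eps0.
set P : R := 2^+p.
have P0 : 0 < P by rewrite exprn_gt0.
have xP0 : 0 <= x * P by rewrite mulr_ge0 // ltW.
have [t1 t2] := andP (truncn_itv xP0).
set j := minn (Num.truncn (x * P)) (2^p).-1.
have e2p : (0 < 2^p)%N by rewrite expn_gt0.
have jp : (j < 2^p)%N by rewrite /j gtn_min; apply/orP; right; rewrite prednK.
have [xj1 xj2] : (j%:R <= x * P) /\ (x * P <= j.+1%:R).
  rewrite /j /minn; case: ifP => h.
    by split => //; exact: ltW.
  rewrite prednK //; split.
    apply: le_trans t1; rewrite ler_nat; move/negbT: h; rewrite -leqNgt; lia.
  by rewrite natrX -/P; rewrite -[X in _ <= X]mul1r ler_pM2r.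
set k := pickle (p, j).
have tk : tgt k = (j%:R / P, j.+1%:R / P) by rewrite /tgt pickleK jp.
have [_ _ _ [m Hm]] := Hf (k, s k) (sv k).
exists m.
have := Hm (sup E); rewrite tk /= => /(_ _) /andP[].
  by apply/andP; split; [exact: xlo k.+1 | exact: xhi k.+1].
move=> y1 y2.
have lx : j%:R / P <= x by rewrite ler_pdivrMr.
have hx : x <= j.+1%:R / P by rewrite ler_pdivlMr.
have hl : j.+1%:R / P = j%:R / P + 1 / P by rewrite -natr1 mulrDl.
rewrite hl in hx y2.
rewrite ltr_norml; apply/andP; split; lra.
Qed.
Lemma tent_cases x : (x <= 2^-1 /\ tent x = 2 * x) \/ (2^-1 <= x /\ tent x = 2 - 2 * x).
Proof. by case: (lerP x 2^-1) => h; [left; rewrite tent_le | right; rewrite tent_ge // ltW]. Qed.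

Local Notation lam := (@lebesgue_measure R).

Lemma lam_cc (a b : R) : a <= b -> lam `[a, b] = (b - a)%:E.
Proof.
move=> ab; rewrite lebesgue_measure_itv /=.
case: ifPn => h; first by rewrite EFinB.
by move: h; rewrite lte_fin lt_neqAle ab andbT negbK => /eqP ->; rewrite subrr.
Qed.

Lemma F_eq c : lam (`]-oo, c] `&` (@I01 R)) = lam (tent @^-1` `]-oo, c] `&` (@I01 R)).
Proof.
rewrite /I01.
case: (ltrP c 0) => c0.
  have -> : `]-oo, c] `&` `[0, 1] = set0 :> set R.
    by apply/seteqP; split => x //=; rewrite !in_itv /= => -[h1 /andP[h2 h3]]; lra.
  have -> : tent @^-1` `]-oo, c] `&` `[0, 1] = set0 :> set R.
    apply/seteqP; split => x //=; rewrite !in_itv /= => -[h1 /andP[h2 h3]].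
    by case: (tent_cases x) => -[h ht]; rewrite ht in h1; lra.
  by [].
case: (ltrP c 1) => c1; last first.
  have -> : `]-oo, c] `&` `[0, 1] = `[0, 1]%classic :> set R.
    by apply/seteqP; split => x //=; rewrite !in_itv /=; [case | move=> /andP[h2 h3]; split => //]; lra.
  have -> : tent @^-1` `]-oo, c] `&` `[0, 1] = `[0, 1]%classic :> set R.
    apply/seteqP; split => x //=; rewrite !in_itv /=; [by case | move=> /andP[h2 h3]; split; last by apply/andP].
    by case: (tent_cases x) => -[h ht]; rewrite ht; lra.
  by [].
have -> : `]-oo, c] `&` `[0, 1] = `[0, c]%classic :> set R.
  by apply/seteqP; split => x //=; rewrite !in_itv /=; [case => h1 /andP[h2 h3] | move=> /andP[h2 h3]; split]; try (apply/andP; split); lra.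
have -> : tent @^-1` `]-oo, c] `&` `[0, 1] = `[0, c / 2] `|` `[1 - c / 2, 1] :> set R.
  apply/seteqP; split => x //=; rewrite !in_itv /=.
    move=> [h1 /andP[h2 h3]].
    by case: (tent_cases x) => -[h ht]; rewrite ht in h1; [left|right]; apply/andP; split; lra.
  move=> [] /andP[h2 h3]; (split; [|apply/andP; split; lra]);
    by case: (tent_cases x) => -[h ht]; rewrite ht; lra.
rewrite (@measureU _ _ _ lam) //; last first.
  apply/seteqP; split => x //=; rewrite !in_itv /= => -[/andP[h1 h2] /andP[h3 h4]]; lra.
rewrite lam_cc //.
rewrite (_ : (c - 0)%:E = (c / 2 - 0)%:E + (1 - (1 - c / 2))%:E); last first.
  by rewrite -EFinD; congr (_%:E); field.
by congr (_ + _); apply/esym; apply: lam_cc; lra.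
Qed.
Lemma tent_meas : measurable_fun setT tent.
Proof.
rewrite (_ : tent = ((fun _ => 2) \* id) \- ((fun _ => 4) \* ((id \- (fun _ => 2^-1)) \max (fun _ => 0)))) //.
apply: measurable_funB.
  by apply: measurable_funM.
apply: measurable_funM => //.
apply: measurable_maxr; last exact: measurable_cst.
apply: measurable_funB => //; exact: measurable_cst.
Qed.

Lemma mI : measurable (@I01 R). Proof. exact: measurable_itv. Qed.
Definition m1 := mrestr lam mI.
Definition m2 : {measure set (measurableTypeR R) -> \bar R}.
Proof. refine (pushforward m1 (tent : measurableTypeR R -> measurableTypeR R) : {measure set (measurableTypeR R) -> \bar R}). exact: tent_meas. Defined.
Lemma m2E A : m2 A = lam (tent @^-1` A `&` @I01 R). Proof. by []. Qed.
Lemma m1E A : m1 A = lam (A `&` @I01 R). Proof. by []. Qed.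

Lemma lamI01 : lam (@I01 R) = 1%:E.
Proof. by rewrite /I01 lam_cc ?subr0 //; lra. Qed.

Lemma m1_fin A : measurable A -> m1 A \is a fin_num.
Proof.
move=> mA; have mAI : measurable (A `&` @I01 R) by apply: measurableI => //; exact: mI.
rewrite m1E ge0_fin_numE; last exact: measure_ge0.
apply: (le_lt_trans (measureIr _ _ _)) => //; first exact: mI.
apply: (@le_lt_trans _ _ 1%:E); last exact: ltry.
by rewrite le_eqVlt; apply/orP; left; apply/eqP; exact: lamI01.
Qed.

Lemma ecancel (x1 y1 z1 x2 y2 z2 : \bar R) : x1 = (y1 + z1)%E -> x2 = (y2 + z2)%E ->
  y1 = y2 -> x1 = x2 -> y1 \is a fin_num -> z1 = z2.
Proof.
move=> -> -> <- e fin.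
have [r er] : exists r, y1 = r%:E by exists (fine y1); rewrite fineK.
move: e; rewrite er => /(congr1 (fun z => (z - r%:E)%E)).
by rewrite ![(r%:E + _)%E]addeC !addeK.
Qed.

Lemma m12 (X : set (measurableTypeR R)) : ocitv X -> m1 X = m2 X.
Proof.
case/ocitvP => [->|[[a b] /= ab ->]]; first by rewrite !measure0.
have U : `]-oo, b]%classic = `]-oo, a] `|` `]a, b] :> set R.
  apply/seteqP; split => x /=; rewrite !in_itv /=.
    by move=> h; case: (lerP x a) => h'; [left|right; apply/andP; split].
  by case => [h|/andP[h1 h2]]; lra.
have D : `]-oo, a] `&` `]a, b] = set0 :> set R.
  by apply/seteqP; split => x //=; rewrite !in_itv /= => -[h /andP[h1 h2]]; lra.
have h1 := @measureU _ _ _ m1 `]-oo, a]%classic `]a, b]%classic (measurable_itv _) (measurable_itv _) D.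
have h2 := @measureU _ _ _ m2 `]-oo, a]%classic `]a, b]%classic (measurable_itv _) (measurable_itv _) D.
rewrite -U in h1 h2.
have Fa : m1 `]-oo, a]%classic = m2 `]-oo, a]%classic by exact: F_eq.
have Fb : m1 `]-oo, b]%classic = m2 `]-oo, b]%classic by exact: F_eq.
have fin := m1_fin _ (measurable_itv `]-oo, a]).
exact: (ecancel _ _ _ _ _ _ h1 h2 Fa Fb fin).
Qed.

Lemma tent_mp (A : set R) : measurable A -> A `<=` @I01 R -> lam (@I01 R `&` tent @^-1` A) = lam A.
Proof.
move=> mA AI.
have key : forall B : set (measurableTypeR R), measurable B -> m1 B = m2 B.
  move=> B mB.
  pose g := fun k : nat => `]-(k%:R), k%:R]%classic : set (measurableTypeR R).
  have H := @measure_unique _ R (measurableTypeR R) (@ocitv R) g.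
  have cov : \bigcup_k g k = [set: measurableTypeR R].
    apply/seteqP; split => // x _.
    exists (Num.truncn `|x|).+1 => //; rewrite /g /= in_itv /=.
    have := truncnS_gt `|x|; have := lexx `|x|; rewrite ler_norml => /andP[h1 h2] h3.
    apply/andP; split; lra.
  have fin : forall k : nat, (m1 (g k) < +oo)%E.
    move=> k; rewrite m1E; apply: (le_lt_trans (@measureIr _ _ _ lam (g k) (@I01 R) (measurable_itv _) mI)).
    apply: (@le_lt_trans _ _ 1%:E); last exact: ltry.
    by rewrite le_eqVlt; apply/orP; left; apply/eqP; exact: lamI01.
  apply: (H _ _ _ cov m1 m2 m12 fin B mB).
  - by [].
  - exact: ocitvI.
  - by move=> k; exact: is_ocitv.
rewrite setIC -m2E -key // m1E setIidl //.
Qed.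
End S.

Theorem lemma1 (R : realType) :
  exists (N : network R 1 1),
    let T := net_map N in
    (forall x : R, 0 <= x <= 1 -> 0 <= T x <= 1) /\
    measure_preserving01 T /\
    exists xi : R, 0 <= xi <= 1 /\
      forall x : R, 0 <= x <= 1 -> forall eps : R, 0 < eps ->
        exists m : nat, `|x - iter m T xi| < eps.
Proof.
exists (tentN R); rewrite tentN_eq; split; [|split].
- move=> x /andP[x0 x1]; case: (tent_cases R x) => -[h ->]; apply/andP; split; lra.
- split.
    by apply: (measurable_funS _ _ (tent_meas R)) => //.
  by move=> A mA AI; exact: tent_mp.
- exact: dense_orbit.
Qed.
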